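(* Let $\langle\cdot,\cdot\rangle$ be an inner product on $\mathrm{span}(\mathcal{H})$ and let $d(A,B)=\langle h_A-h_B,h_A-h_B\rangle^{1/2}$ for $A,B\in\mathcal{K}_n$. Let $A_1,\dots,A_N\in\mathcal{K}_n$ with $N\geq 1$. Then the convex body $X\in\mathcal{K}_n$ minimizing $\sum_{i=1}^N d(A_i,X)^2$ is $X=\frac{1}{N}\sum_{i=1}^N A_i$ (Minkowski sum).
   Context: A convex body is a closed, bounded, non-empty convex subset of $\mathbb{R}^n$; $\mathcal{K}_n$ is the set of convex bodies in $\mathbb{R}^n$ with Minkowski addition and nonnegative scaling. The support function of $A$ is $h_A(x)=\sup\{a\cdot x: a\in A\}$; $\mathcal{H}=\{h_A : A\in\mathcal{K}_n\}$ and $\mathrm{span}(\mathcal{H})$ is its linear span among real functions on $\mathbb{R}^n$. *)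

(* Defs.v *)
From HB Require Import structures.
From mathcomp Require Import all_boot all_order all_algebra.
From mathcomp Require Import all_classical all_reals all_analysis.
Set Implicit Arguments. Unset Strict Implicit. Unset Printing Implicit Defensive.
Import Order.TTheory GRing.Theory Num.Theory.
Import numFieldNormedType.Exports.
Local Open Scope classical_set_scope.
Local Open Scope ring_scope.

Section ConvexBodies.
Variables (R : realType) (n : nat).
Local Notation V := 'rV[R]_n.

Definition dotv (a x : V) : R := \sum_(i < n) a ord0 i * x ord0 i.

Definition convex_setv (A : set V) : Prop :=
  forall x y (t : R), A x -> A y -> 0 <= t -> t <= 1 -> A (t *: x + (1 - t) *: y).

Definition convex_body (A : set V) : Prop :=
  [/\ closed A, bounded_set A, A !=set0 & convex_setv A].

Definition support (A : set V) : V -> R :=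
  fun x => sup [set dotv a x | a in A].

Definition mink_sum (A B : set V) : set V := [set a + b | a in A & b in B].
Definition mink_scale (c : R) (A : set V) : set V := [set c *: a | a in A].

Definition spanH (f : V -> R) : Prop :=
  exists (k : nat) (c : 'I_k -> R) (B : 'I_k -> set V),
    (forall j, convex_body (B j)) /\
    f = (fun x => \sum_(j < k) c j * support (B j) x).

(* an inner product on span(H) (values of ip outside span(H) are irrelevant) *)
Definition inner_product_on_spanH (ip : (V -> R) -> (V -> R) -> R) : Prop :=
  [/\ forall f g, spanH f -> spanH g -> ip f g = ip g f,
      forall (a : R) f g k, spanH f -> spanH g -> spanH k ->
        ip (fun x => a * f x + g x) k = a * ip f k + ip g k
    & forall f, spanH f -> f <> (fun _ => 0) -> 0 < ip f f].

Definition dist_ip (ip : (V -> R) -> (V -> R) -> R) (A B : set V) : R :=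
  Num.sqrt (ip (fun x => support A x - support B x) (fun x => support A x - support B x)).

End ConvexBodies.

(* Main.v *)
Require Import Defs.
From HB Require Import structures.
From mathcomp Require Import all_boot all_order all_algebra.
From mathcomp Require Import all_classical all_reals all_analysis.
From mathcomp Require Import ring lra.
Import Order.TTheory GRing.Theory Num.Theory.
Import numFieldNormedType.Exports.
Local Open Scope classical_set_scope.
Local Open Scope ring_scope.

Lemma dotvDl (R : realType) n (a b x : 'rV[R]_n) : dotv (a + b) x = dotv a x + dotv b x.
Proof. by rewrite /dotv -big_split; apply: eq_bigr => i _; rewrite mxE mulrDl. Qed.
Lemma dotvZl (R : realType) n c (a x : 'rV[R]_n) : dotv (c *: a) x = c * dotv a x.
Proof. by rewrite /dotv mulr_sumr; apply: eq_bigr => i _; rewrite mxE mulrA. Qed.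
Lemma dotvC (R : realType) n (a x : 'rV[R]_n) : dotv a x = dotv x a.
Proof. by rewrite /dotv; apply: eq_bigr => i _; rewrite mulrC. Qed.
Lemma dotvNl (R : realType) n (a x : 'rV[R]_n) : dotv (- a) x = - dotv a x.
Proof. by rewrite -scaleN1r dotvZl mulN1r. Qed.
Lemma dotvBl (R : realType) n (a b x : 'rV[R]_n) : dotv (a - b) x = dotv a x - dotv b x.
Proof. by rewrite dotvDl dotvNl. Qed.
Lemma dotv_ge0 (R : realType) n (a : 'rV[R]_n) : 0 <= dotv a a.
Proof. by rewrite /dotv sumr_ge0 // => i _; rewrite -expr2 sqr_ge0. Qed.
Lemma dotv_gt0 (R : realType) n (a : 'rV[R]_n) : a != 0 -> 0 < dotv a a.
Proof.
move=> a0; rewrite lt_def dotv_ge0 andbT; apply: contra a0 => /eqP.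
rewrite /dotv => /eqP; rewrite psumr_eq0; last by move=> i _; rewrite -expr2 sqr_ge0.
move=> /allP H; apply/eqP/rowP => i; rewrite mxE.
by have /(_ (mem_index_enum i)) := H i; rewrite /= mulf_eq0 orbb => /eqP.
Qed.

Lemma dotv_continuous (R : realType) n (T : topologicalType) (f g : T -> 'rV[R]_n) :
  continuous f -> continuous g -> continuous (fun t => dotv (f t) (g t)).
Proof.
move=> cf cg; rewrite /dotv.
apply: continuous_big => [|i _ t].
  by move=> z; apply: cvgD; [exact: cvg_fst|exact: cvg_snd].
apply: continuousM.
- exact: (continuous_comp (cf t) (@coord_continuous R 1 n ord0 i _)).
- exact: (continuous_comp (cg t) (@coord_continuous R 1 n ord0 i _)).
Qed.

Lemma mink_sum_compact (R : realType) n (A B : set 'rV[R]_n) :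
  compact A -> compact B -> compact (mink_sum A B).
Proof.
move=> cA cB.
have -> : mink_sum A B = (fun z : 'rV[R]_n * 'rV[R]_n => z.1 + z.2) @` (A `*` B).
  apply/seteqP; split => z.
  - by case=> a Aa [b Bb <-]; exists (a, b).
  - by case=> -[a b] [/= Aa Bb] <-; exists a => //; exists b.
apply: continuous_compact; last exact: compact_setX.
by apply: continuous_subspaceT => z; apply: cvgD; [exact: cvg_fst|exact: cvg_snd].
Qed.

Lemma mink_scale_compact (R : realType) n c (A : set 'rV[R]_n) :
  compact A -> compact (mink_scale c A).
Proof.
move=> cA; apply: continuous_compact => //; apply: continuous_subspaceT => z.
by apply: continuousZl_tmp; exact: cvg_id.
Qed.

Lemma mink_sum_convex (R : realType) n (A B : set 'rV[R]_n) :
  convex_setv A -> convex_setv B -> convex_setv (mink_sum A B).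
Proof.
move=> cA cB x y t [a Aa [b Bb <-]] [a' Aa' [b' Bb' <-]] t0 t1.
exists (t *: a + (1-t) *: a'); first exact: cA.
exists (t *: b + (1-t) *: b'); first exact: cB.
by rewrite !scalerDr addrACA.
Qed.

Lemma mink_scale_convex (R : realType) n c (A : set 'rV[R]_n) :
  convex_setv A -> convex_setv (mink_scale c A).
Proof.
move=> cA x y t [a Aa <-] [a' Aa' <-] t0 t1.
exists (t *: a + (1-t) *: a'); first exact: cA.
by rewrite scalerDr !scalerA mulrC [(1-t)*c]mulrC.
Qed.

Lemma dot_img_has_sup (R : realType) n (A : set 'rV[R]_n) (x : 'rV[R]_n) :
  compact A -> A !=set0 -> has_sup [set dotv a x | a in A].
Proof.
move=> cA [a Aa]; apply: compact_has_sup; first by exists (dotv a x), a.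
apply: continuous_compact => //; apply: continuous_subspaceT.
by apply: dotv_continuous => //; [move=> ?; exact: cvg_id | exact: cst_continuous].
Qed.

Lemma support_mink_sum (R : realType) n (A B : set 'rV[R]_n) (x : 'rV[R]_n) :
  compact A -> A !=set0 -> compact B -> B !=set0 ->
  Defs.support (mink_sum A B) x = Defs.support A x + Defs.support B x.
Proof.
move=> cA A0 cB B0; rewrite /Defs.support -sup_sumE; try exact: dot_img_has_sup.
congr sup; apply/seteqP; split => z.
- case=> _ [a Aa [b Bb <-]] <-; exists (dotv a x); first by exists a.
  by exists (dotv b x); [exists b | rewrite dotvDl].
- case=> _ [a Aa <-] [_ [b Bb <-] <-]; exists (a + b); last by rewrite dotvDl.
  by exists a => //; exists b.
Qed.

Lemma support_set0 (R : realType) n (x : 'rV[R]_n) : Defs.support [set 0] x = 0.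
Proof.
rewrite /Defs.support (_ : [set dotv a x | a in [set 0]] = [set 0]) ?sup1 //.
apply/seteqP; split => z.
- by case=> a /= -> <-; rewrite -(scale0r 0) dotvZl mul0r.
- by move=> /= ->; exists 0 => //; rewrite -(scale0r 0) dotvZl mul0r.
Qed.

Lemma sup_scale (R : realType) (c : R) (S : set R) :
  0 < c -> has_sup S -> sup [set c * y | y in S] = c * sup S.
Proof.
move=> c0 [S0 ubS].
have hT : has_sup [set c * y | y in S].
  split; first by case: S0 => y Sy; exists (c * y), y.
  case: ubS => m Hm; exists (c * m) => _ [y Sy <-]; by rewrite ler_pM2l //; apply: Hm.
apply/le_anti/andP; split.
- apply: ge_sup; first by case: hT.
  move=> _ [y Sy <-]; rewrite ler_pM2l //; exact: ub_le_sup.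
- rewrite -ler_pdivlMl //; apply: ge_sup => // y Sy; rewrite ler_pdivlMl //.
  by apply: ub_le_sup; [case: hT | exists y].
Qed.

Lemma support_mink_scale (R : realType) n c (A : set 'rV[R]_n) (x : 'rV[R]_n) :
  0 < c -> compact A -> A !=set0 ->
  Defs.support (mink_scale c A) x = c * Defs.support A x.
Proof.
move=> c0 cA A0; rewrite /Defs.support -sup_scale //; last exact: dot_img_has_sup.
congr sup; apply/seteqP; split => z.
- by case=> _ [a Aa <-] <-; exists (dotv a x); [exists a | rewrite dotvZl].
- by case=> _ [a Aa <-] <-; exists (c *: a); [exists a | rewrite dotvZl].
Qed.

Lemma dotv_expand (R : realType) n (u w : 'rV[R]_n) t :
  dotv (u - t *: w) (u - t *: w) = dotv u u - 2 * t * dotv w u + t ^+ 2 * dotv w w.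
Proof.
rewrite dotvBl dotvZl [dotv u _]dotvC [dotv w _]dotvC !dotvBl !dotvZl [dotv u w]dotvC.
by rewrite mulrBr mulrA -expr2; ring.
Qed.

Lemma num_contra (R : realType) (t d D : R) :
  0 < d -> 0 <= D -> t * (D + d) = d -> 2 * t * d <= t ^+ 2 * D -> False.
Proof.
move=> d0 D0 ht h.
have t0 : 0 < t.
  rewrite ltNge; apply/negP => tle0.
  have : t * (D + d) <= 0 by apply: mulr_le0_ge0 => //; lra.
  by rewrite ht leNgt d0.
have h2 : 0 <= t * (t * D - 2 * d) by rewrite mulrBr subr_ge0 !mulrA -expr2 [t * 2]mulrC.
have h3 : 0 <= t * D - 2 * d by rewrite -(pmulr_rge0 _ t0).
have h4 : 0 < t * d by rewrite mulr_gt0.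
rewrite mulrDr in ht; lra.
Qed.

Lemma support_sub (R : realType) n (X Y : set 'rV[R]_n) :
  compact X -> X !=set0 -> compact Y -> Y !=set0 -> convex_setv Y ->
  (forall u, Defs.support X u <= Defs.support Y u) -> X `<=` Y.
Proof.
move=> cX X0 cY Y0 cvY hXY x Xx; apply: contrapT => nYx.
have fc : {within Y, continuous (fun p => dotv (x - p) (x - p))}.
  apply: continuous_subspaceT; apply: dotv_continuous => q;
  by apply: (@continuousB _ _ _ (fun=> x) id); [exact: cst_continuous | exact: cvg_id].
have [p /set_mem Yp pmin] := compact_EVT_min Y0 cY fc.
set u := x - p.
have key : forall y, Y y -> dotv y u <= dotv p u.
  move=> y Yy; rewrite leNgt; apply/negP => H.
  set d := dotv (y - p) u.
  have d0 : 0 < d by rewrite /d dotvBl subr_gt0.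
  set D := dotv (y - p) (y - p).
  have D0 : 0 <= D by exact: dotv_ge0.
  have Dd0 : 0 < D + d by rewrite ltr_wpDl.
  set t := d / (D + d).
  have ht : t * (D + d) = d by rewrite /t divfK // gt_eqF.
  have t0 : 0 <= t by rewrite /t divr_ge0 // ltW.
  have t1 : t <= 1 by rewrite /t ler_pdivrMr // mul1r lerDr.
  have Yq := cvY y p t Yy Yp t0 t1.
  have eq : t *: y + (1 - t) *: p = p + t *: (y - p).
    by rewrite scalerBl scale1r scalerBr addrCA.
  have := pmin _ (mem_set Yq); rewrite eq opprD addrA -/u dotv_expand.
  rewrite -/d -/D => h.
  apply: (@num_contra _ t d D d0 D0 ht); lra.
have up0 : u != 0 by rewrite /u subr_eq0; apply/eqP => xp; apply: nYx; rewrite xp.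
have hY : Defs.support Y u = dotv p u.
  apply/le_anti/andP; split.
    by apply: ge_sup; [case: Y0 => y Yy; exists (dotv y u), y | move=> _ [y Yy <-]; exact: key].
  by apply: ub_le_sup; [case: (@dot_img_has_sup _ _ Y u cY Y0) | exists p].
have hX : dotv x u <= Defs.support X u.
  by apply: ub_le_sup; [case: (@dot_img_has_sup _ _ X u cX X0) | exists x].
have := hXY u; rewrite hY => h.
have : dotv x u - dotv p u <= 0 by rewrite subr_le0 (le_trans hX h).
by rewrite -dotvBl -/u leNgt dotv_gt0.
Qed.

Lemma spanH_support (R : realType) n (B : set 'rV[R]_n) :
  convex_body B -> spanH (Defs.support B).
Proof.
move=> cB; exists 1%N, (fun=> 1), (fun=> B); split => // .
by apply: funext => x; rewrite big_ord1 mul1r.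
Qed.

Lemma spanH0 (R : realType) n : spanH (fun _ : 'rV[R]_n => 0 : R).
Proof.
exists 0%N, (fun=> 0), (fun=> set0); split; first by case.
by apply: funext => x; rewrite big_ord0.
Qed.

Lemma spanH_lin (R : realType) n (a : R) (f g : 'rV[R]_n -> R) :
  spanH f -> spanH g -> spanH (fun x => a * f x + g x).
Proof.
move=> [k1 [c1 [B1 [h1 ->]]]] [k2 [c2 [B2 [h2 ->]]]].
exists (k1 + k2)%N,
  (fun j => match fintype.split (j : 'I_(k1 + k2)) with inl j1 => a * c1 j1 | inr j2 => c2 j2 end),
  (fun j => match fintype.split (j : 'I_(k1 + k2)) with inl j1 => B1 j1 | inr j2 => B2 j2 end).
split; first by move=> j; case: (fintype.split j).
apply: funext => x; rewrite big_split_ord /= mulr_sumr.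
have e1 : forall j, fintype.split (lshift k2 j) = inl j := fun j => unsplitK (inl j).
have e2 : forall j, fintype.split (rshift k1 j) = inr j := fun j => unsplitK (inr j).
congr (_ + _); apply: eq_bigr => j _; by rewrite ?e1 ?e2 ?mulrA.
Qed.

Lemma spanH_sum {R : realType} {n : nat} {I : Type} (r : seq I) {F : I -> 'rV[R]_n -> R} :
  (forall i, spanH (F i)) -> spanH (fun x => \sum_(i <- r) F i x).
Proof.
move=> hF; elim: r => [|i r IH].
  by rewrite (_ : (fun x => _) = fun _ => 0); [exact: spanH0 | apply: funext => x; rewrite big_nil].
rewrite (_ : (fun x => _) = fun x => 1 * F i x + \sum_(j <- r) F j x).
  exact: spanH_lin.
by apply: funext => x; rewrite big_cons mul1r.
Qed.

Lemma ip0l {R : realType} {n : nat} {ip : ('rV[R]_n -> R) -> ('rV[R]_n -> R) -> R} {k} :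
  inner_product_on_spanH ip -> spanH k -> ip (fun _ => 0) k = 0.
Proof.
move=> [_ hl _] hk.
have := hl 1 (fun _ => 0) (fun _ => 0) k (@spanH0 R n) (@spanH0 R n) hk.
rewrite (_ : (fun x => _) = fun _ => 0); last by apply: funext => x; rewrite mulr0 addr0.
rewrite mul1r => /eqP; rewrite -subr_eq0 opprD addrA subrr sub0r oppr_eq0.
by move/eqP.
Qed.

Lemma ipDl {R : realType} {n : nat} {ip : ('rV[R]_n -> R) -> ('rV[R]_n -> R) -> R} {f g k} :
  inner_product_on_spanH ip -> spanH f -> spanH g -> spanH k ->
  ip (fun x => f x + g x) k = ip f k + ip g k.
Proof.
move=> [_ hl _] hf hg hk; have := hl 1 f g k hf hg hk.
rewrite mul1r => <-; congr ip; apply: funext => x; by rewrite mul1r.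
Qed.

Lemma ipZl {R : realType} {n : nat} {ip : ('rV[R]_n -> R) -> ('rV[R]_n -> R) -> R} {a f k} :
  inner_product_on_spanH ip -> spanH f -> spanH k ->
  ip (fun x => a * f x) k = a * ip f k.
Proof.
move=> hip hf hk; have [_ hl _] := hip.
have := hl a f (fun _ => 0) k hf (@spanH0 R n) hk.
rewrite (ip0l hip hk) addr0 => <-; congr ip; apply: funext => x; by rewrite addr0.
Qed.

Lemma ip_ge0 {R : realType} {n : nat} {ip : ('rV[R]_n -> R) -> ('rV[R]_n -> R) -> R} {f} :
  inner_product_on_spanH ip -> spanH f -> 0 <= ip f f.
Proof.
move=> hip hf; have [_ _ hp] := hip.
have [->|nf] := pselect (f = fun _ => 0); first by rewrite (ip0l hip (@spanH0 R n)).
exact/ltW/hp.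
Qed.

Lemma ip_sum {R : realType} {n : nat} {ip : ('rV[R]_n -> R) -> ('rV[R]_n -> R) -> R}
  (I : Type) (r : seq I) (F : I -> 'rV[R]_n -> R) {k} :
  inner_product_on_spanH ip -> (forall i, spanH (F i)) -> spanH k ->
  ip (fun x => \sum_(i <- r) F i x) k = \sum_(i <- r) ip (F i) k.
Proof.
move=> hip hF hk; elim: r => [|i r IH].
  rewrite big_nil (_ : (fun x => _) = fun _ => 0) ?(ip0l hip hk) //; apply: funext => x; by rewrite big_nil.
rewrite big_cons -IH -(ipDl hip (hF i) (spanH_sum r hF) hk).
by congr ip; apply: funext => x; rewrite big_cons.
Qed.

Lemma cb_props {R : realType} {n : nat} {B : set 'rV[R]_n} :
  convex_body B -> [/\ compact B, B !=set0 & convex_setv B].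
Proof. by case=> cl bd ne cv; split => //; exact: bounded_closed_compact. Qed.

Lemma big_mink_props (R : realType) n N (A : 'I_N -> set 'rV[R]_n) :
  (forall i, convex_body (A i)) ->
  [/\ compact (\big[@mink_sum R n/[set 0]]_(i < N) A i),
      (\big[@mink_sum R n/[set 0]]_(i < N) A i) !=set0,
      convex_setv (\big[@mink_sum R n/[set 0]]_(i < N) A i) &
      forall x, Defs.support (\big[@mink_sum R n/[set 0]]_(i < N) A i) x
                = \sum_(i < N) Defs.support (A i) x].
Proof.
move=> hA.
have P1 : [/\ compact (\big[@mink_sum R n/[set 0]]_(i < N) A i),
      (\big[@mink_sum R n/[set 0]]_(i < N) A i) !=set0 &
      convex_setv (\big[@mink_sum R n/[set 0]]_(i < N) A i)].
  apply: (big_ind (fun S => [/\ compact S, S !=set0 & convex_setv S])).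
  - split; [exact: compact_set1 | by exists 0 |].
    by move=> x y t /= -> -> _ _; rewrite !scaler0 addr0.
  - move=> S T [cS [s Ss] vS] [cT [t Tt] vT]; split.
    + exact: mink_sum_compact.
    + by exists (s + t), s => //; exists t.
    + exact: mink_sum_convex.
  - by move=> i _; case: (cb_props (hA i)).
case: P1 => c1 c2 c3; split => // x.
have := @big_ind2 _ _ (fun (S : set 'rV[R]_n) (s : R) => (compact S /\ S !=set0) /\ Defs.support S x = s) [set 0] (@mink_sum R n) 0 +%R.
move=> /(_ _ _ _ (index_enum 'I_N) xpredT A (fun i => Defs.support (A i) x)) H.
apply: (proj2 (H _ _ _)).
- by split; [split; [exact: compact_set1 | by exists 0] | exact: support_set0].
- move=> S s T t [[cS [a Sa]] <-] [[cT [b Tb]] <-]; split.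
    by split; [exact: mink_sum_compact | by exists (a + b), a => //; exists b].
  by apply: support_mink_sum => //; [exists a | exists b].
- by move=> i _; case: (cb_props (hA i)) => cA A0 _.
Qed.

Lemma spanH_sub (R : realType) n (f g : 'rV[R]_n -> R) :
  spanH f -> spanH g -> spanH (fun x => f x - g x).
Proof.
move=> hf hg; rewrite (_ : (fun x => f x - g x) = fun x => (-1) * g x + f x).
  exact: spanH_lin.
by apply: funext => x; rewrite mulN1r addrC.
Qed.

Lemma key_identity (R : realType) n N (ip : ('rV[R]_n -> R) -> ('rV[R]_n -> R) -> R)
  (hip : inner_product_on_spanH ip) (A : 'I_N -> set 'rV[R]_n)
  (hA : forall i, convex_body (A i)) (M X : set 'rV[R]_n) :
  convex_body M -> convex_body X ->
  (forall x, N%:R * Defs.support M x = \sum_(i < N) Defs.support (A i) x) ->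
  \sum_(i < N) dist_ip ip (A i) X ^+ 2 =
  \sum_(i < N) dist_ip ip (A i) M ^+ 2 +
  N%:R * ip (fun x => Defs.support M x - Defs.support X x)
            (fun x => Defs.support M x - Defs.support X x).
Proof.
move=> cbM cbX hM.
have [hsym _ _] := hip.
have sh i := @spanH_support _ _ _ (hA i).
have sm := @spanH_support _ _ _ cbM.
have sg := @spanH_support _ _ _ cbX.
set w := fun x => Defs.support M x - Defs.support X x.
have sw : spanH w := @spanH_sub _ _ _ _ sm sg.
pose u i := fun x => Defs.support (A i) x - Defs.support M x.
have su i : spanH (u i) := @spanH_sub _ _ _ _ (sh i) sm.
have E i : dist_ip ip (A i) X ^+ 2 = ip (u i) (u i) + 2 * ip (u i) w + ip w w.
  rewrite /dist_ip sqr_sqrtr; last exact: ip_ge0 hip (@spanH_sub _ _ _ _ (sh i) sg).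
  have -> : (fun x => Defs.support (A i) x - Defs.support X x) = (fun x => u i x + w x).
    by apply: funext => x; rewrite /u /w /= addrA subrK.
  have suw : spanH (fun x => u i x + w x).
    rewrite (_ : (fun x => _) = fun x => 1 * u i x + w x); first exact: spanH_lin.
    by apply: funext => x; rewrite mul1r.
  rewrite (ipDl hip (su i) sw suw) (hsym _ _ (su i) suw) (hsym _ _ sw suw).
  rewrite (ipDl hip (su i) sw (su i)) (ipDl hip (su i) sw sw) (hsym _ _ sw (su i)).
  ring.
have E' i : dist_ip ip (A i) M ^+ 2 = ip (u i) (u i).
  by rewrite /dist_ip sqr_sqrtr //; exact: ip_ge0 hip (su i).
have S0 : \sum_(i < N) ip (u i) w = 0.
  rewrite -(ip_sum _ (index_enum 'I_N) u hip su sw).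
  rewrite (_ : (fun x => _) = fun _ => 0) ?(ip0l hip sw) //.
  apply: funext => x; rewrite /u sumrB sumr_const card_ord -mulr_natl hM.
  by rewrite subrr.
rewrite (eq_bigr _ (fun i _ => E i)) (eq_bigr _ (fun i _ => E' i)) !big_split /=.
by rewrite -mulr_sumr S0 mulr0 addr0 sumr_const card_ord mulr_natl.
Qed.

Theorem proposition8 (R : realType) (n N : nat)
    (ip : ('rV[R]_n -> R) -> ('rV[R]_n -> R) -> R)
    (hip : inner_product_on_spanH ip)
    (A : 'I_N -> set 'rV[R]_n) (hA : forall i, convex_body (A i))
    (hN : (1 <= N)%N) :
  let M := mink_scale ((N%:R : R)^-1) (\big[@mink_sum R n/[set 0]]_(i < N) A i) in
  [/\ convex_body M,
      forall X, convex_body X ->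
        \sum_(i < N) dist_ip ip (A i) M ^+ 2 <= \sum_(i < N) dist_ip ip (A i) X ^+ 2
    & forall X, convex_body X ->
        \sum_(i < N) dist_ip ip (A i) X ^+ 2 <= \sum_(i < N) dist_ip ip (A i) M ^+ 2 ->
        X = M].
Proof.
move=> M.
have [cS [s Ss] cvS hS] := @big_mink_props _ _ _ A hA.
have Npos : 0 < (N%:R : R) by rewrite ltr0n.
have Ninv : 0 < (N%:R : R)^-1 by rewrite invr_gt0.
have cM := @mink_scale_compact _ _ ((N%:R : R)^-1) _ cS; rewrite -/M in cM.
have M0 : M !=set0 by exists ((N%:R : R)^-1 *: s), s.
have cvM := @mink_scale_convex _ _ ((N%:R : R)^-1) _ cvS; rewrite -/M in cvM.
have hM : forall x, N%:R * Defs.support M x = \sum_(i < N) Defs.support (A i) x.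
  move=> x; rewrite /M support_mink_scale //; last by exists s.
  by rewrite mulrA mulfV ?gt_eqF // mul1r hS.
have cbM : convex_body M.
  split => //; [exact: compact_closed (@norm_hausdorff _ _) cM | exact: compact_bounded].
split => // X cbX; rewrite (@key_identity _ _ _ _ hip _ hA _ _ cbM cbX hM).
  rewrite lerDl mulr_ge0 ?ler0n //.
  exact: (ip_ge0 hip (@spanH_sub _ _ _ _ (@spanH_support _ _ _ cbM) (@spanH_support _ _ _ cbX))).
rewrite -[leRHS]addr0 lerD2l pmulr_rle0 // => hle.
have [_ _ hp] := hip.
have sw : spanH (fun x => Defs.support M x - Defs.support X x).
  exact: (@spanH_sub _ _ _ _ (@spanH_support _ _ _ cbM) (@spanH_support _ _ _ cbX)).
have w0 : (fun x => Defs.support M x - Defs.support X x) = (fun _ => 0).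
  apply: contrapT => /(hp _ sw); by rewrite ltNge hle.
have eqs : forall x, Defs.support X x = Defs.support M x.
  move=> x; have := congr1 (fun f => f x) w0; rewrite /= => /eqP.
  by rewrite subr_eq0 => /eqP ->.
have [cX X0 cvX] := cb_props cbX.
apply/seteqP; split.
- by apply: support_sub => // u; rewrite eqs.
- by apply: support_sub => // u; rewrite eqs.
Qed.
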